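(* Let $\tau\in\mathscr C^r(\mathbb{S}^1,\mathbb{R})$, fix $R>\|\tau'\|_\infty$ and $\rho>0$. Let $I_j=(a_j,b_j)$, $1\le j\le J$, be open intervals covering $[\log\lambda,\log\Lambda]$ with $b_j-a_j<\rho/3$; let $N=\lceil 6\rho^{-1}\log\lceil2\Lambda\rceil\rceil$; and let $q$ be a positive integer with $(q+1)N e^{-q\rho/2}<1/(4J)$ and $\ell^q\ge 2(q+1)N$. If $\mathcal N(\tau)\ge e^\rho$, then for infinitely many $n\ge q$ there exist a point $z_0=(x,s)\in\mathbb{T}^2$, a unit vector $v_0\in\mathbb{R}^2$, an integer $1\le j\le J$, a subset $B\subset\mathcal A^q$ with $\#B=2(q+1)N$, and for each $\beta\in B$ a subset $\Sigma(\beta)\subset\mathcal A^n$ with $\#\Sigma(\beta)\ge e^{\rho n}\ell^{-q}/(2J)$, such that for every $\beta\in B$ and every $\alpha\in\Sigma(\beta)$: $[\alpha]_q=\beta$, $v_0\in Df^n(x_\alpha)\mathscr K_R$, and $(E^n)'(x_\alpha)\in[e^{a_j n},e^{b_j n}]$.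
   Context: $\mathbb{S}^1=\mathbb{R}/\mathbb{Z}$, $\mathbb{T}^2=\mathbb{S}^1\times\mathbb{S}^1$, $r\ge2$. $E:\mathbb{S}^1\to\mathbb{S}^1$ is a $\mathscr C^r$ expanding map of degree $\ell\ge2$ with $1<\lambda\le E'(x)\le\Lambda$ for all $x$, and $0$ is a fixed point of $E$. For $\tau\in\mathscr C^r(\mathbb{S}^1,\mathbb{R})$, $f(x,s)=(E(x),s+\tau(x)\bmod1)$; $Df(x,s)=\begin{pmatrix}E'(x)&0\\ \tau'(x)&1\end{pmatrix}$ depends only on $x$, and $Df^n(y)$ denotes $Df^n(y,s)$ for any $s$. For $R>0$, $\vartheta_R=R/(\lambda-1)$, $\mathscr K_R=\{(\xi,\eta):|\eta|\le\vartheta_R|\xi|\}$; for $R>\|\tau'\|_\infty$, $\mathcal N(\tau,R;n)=\sup_{z}\sup_{v}\#\{\zeta\in f^{-n}(z):v\in Df^n(\zeta)\mathscr K_R\}$ (sup over $z\in\mathbb{T}^2$ and unit vectors $v$) and $\mathcal N(\tau)=\lim_n\mathcal N(\tau,R;n)^{1/n}$ (exists, independent of $R$). Symbolic coding: $\mathcal A=\{0,\dots,\ell-1\}$; the $\ell$ points of $E^{-1}(0)$ divide $\mathbb{S}^1$ into half-open intervals $\mathcal I(j)$, $j\in\mathcal A$, each mapped bijectively onto $\mathbb{S}^1$ by $E$. For $\alpha=(\alpha_n,\dots,\alpha_1)\in\mathcal A^n$, $\mathcal I(\alpha)=\bigcap_{i=0}^{n-1}E^{-i}(\mathcal I(\alpha_{n-i}))$,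 which $E^n$ maps bijectively onto $\mathbb{S}^1$; for $x\in\mathbb{S}^1$, $x_\alpha$ is the unique point of $\mathcal I(\alpha)$ with $E^n(x_\alpha)=x$. For $1\le p\le n$, $[\alpha]_p=(\alpha_p,\dots,\alpha_1)\in\mathcal A^p$. *)

(* Defs.v *)
From Stdlib Require Export Reals List.
Open Scope R_scope.

Definition Rfloor (x : R) : Z := (up x - 1)%Z.
Definition Rceil (x : R) : Z := (- Rfloor (- x))%Z.
Definition Rfrac (x : R) : R := x - IZR (Rfloor x).

(* points of S^1 = R/Z and of T^2 are represented by coordinates in [0,1) *)
Definition InUnit (x : R) : Prop := 0 <= x < 1.

Definition is_Cr (r : nat) (f : R -> R) : Prop :=
  exists d : nat -> R -> R,
    d 0%nat = f /\
    (forall k x, (k < r)%nat -> derivable_pt_lim (d k) x (d (S k) x)) /\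
    continuity (d r).

(* E : S^1 -> S^1 given by its lift F (F(x+1) = F(x) + l, F(0) = 0) *)
Definition Emap (F : R -> R) (x : R) : R := Rfrac (F x).

Definition fmap (F tau : R -> R) (p : R * R) : R * R :=
  (Emap F (fst p), Rfrac (snd p + tau (fst p))).

Record mat2 := Mat2 { m11 : R; m12 : R; m21 : R; m22 : R }.
Definition mmul (A B : mat2) : mat2 :=
  Mat2 (m11 A * m11 B + m12 A * m21 B) (m11 A * m12 B + m12 A * m22 B)
       (m21 A * m11 B + m22 A * m21 B) (m21 A * m12 B + m22 A * m22 B).
Definition mapply (A : mat2) (w : R * R) : R * R :=
  (m11 A * fst w + m12 A * snd w, m21 A * fst w + m22 A * snd w).

Definition Dfmat (dF dtau : R -> R) (y : R) : mat2 := Mat2 (dF y) 0 (dtau y) 1.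

(* Df^n(y) = Df(E^{n-1} y) ... Df(y)  (chain rule), i.e. Df^{n+1}(y) = Df^n(E y) Df(y) *)
Fixpoint Dfn (F dF dtau : R -> R) (n : nat) (y : R) : mat2 :=
  match n with
  | O => Mat2 1 0 0 1
  | S k => mmul (Dfn F dF dtau k (Emap F y)) (Dfmat dF dtau y)
  end.

Fixpoint dEn (F dF : R -> R) (n : nat) (y : R) : R :=
  match n with
  | O => 1
  | S k => dEn F dF k (Emap F y) * dF y
  end.

Definition cone (theta : R) (w : R * R) : Prop := Rabs (snd w) <= theta * Rabs (fst w).
Definition in_img_cone (M : mat2) (theta : R) (v : R * R) : Prop :=
  exists w, cone theta w /\ v = mapply M w.
Definition thetaR (Rc lam : R) : R := Rc / (lam - 1).

(* symbolic coding: I(j) = { y in [0,1) : j <= F y < j+1 }, i.e. [c_j, c_{j+1})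
   where c_0 = 0 < c_1 < ... < c_l = 1 are the points of E^{-1}(0). *)
Definition Icyl (F : R -> R) (j : nat) (y : R) : Prop :=
  InUnit y /\ INR j <= F y < INR j + 1.

(* words alpha = (alpha_n, ..., alpha_1) in A^n, stored as the list
   [alpha_n; ...; alpha_1]; so nth i alpha = alpha_{n-i}. *)
Definition is_word (l n : nat) (alpha : list nat) : Prop :=
  length alpha = n /\ Forall (fun a => (a < l)%nat) alpha.

(* [alpha]_p = (alpha_p, ..., alpha_1) *)
Definition trunc (p : nat) (alpha : list nat) : list nat :=
  skipn (length alpha - p) alpha.

(* y = x_alpha : y in I(alpha) and E^n(y) = x *)
Definition is_x_alpha (F : R -> R) (x : R) (alpha : list nat) (y : R) : Prop :=
  InUnit y /\ Nat.iter (length alpha) (Emap F) y = x /\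
  forall i, (i < length alpha)%nat -> Icyl F (nth i alpha 0%nat) (Nat.iter i (Emap F) y).

Definition has_card {T : Type} (P : T -> Prop) (k : nat) : Prop :=
  exists L : list T, NoDup L /\ length L = k /\ forall p, In p L <-> P p.

Definition unit_vec (v : R * R) : Prop := fst v ^ 2 + snd v ^ 2 = 1.

Definition good_preimage (F tau dF dtau : R -> R) (theta : R) (n : nat)
  (z v zeta : R * R) : Prop :=
  InUnit (fst zeta) /\ InUnit (snd zeta) /\
  Nat.iter n (fmap F tau) zeta = z /\
  in_img_cone (Dfn F dF dtau n (fst zeta)) theta v.

Definition Ncounts (F tau dF dtau : R -> R) (theta : R) (n : nat) (c : R) : Prop :=
  exists z v k, InUnit (fst z) /\ InUnit (snd z) /\ unit_vec v /\
    has_card (good_preimage F tau dF dtau theta n z v) k /\ c = INR k.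

(* N(tau) >= c : with N(tau,R;n) = sup of the counts, N(tau) = lim N(tau,R;n)^{1/n} *)
Definition Ntau_ge (F tau dF dtau : R -> R) (Rc lam c : R) : Prop :=
  exists (Nseq : nat -> R) (L : R),
    (forall n, is_lub (Ncounts F tau dF dtau (thetaR Rc lam) n) (Nseq n)) /\
    Un_cv (fun n => Rpower (Nseq n) (/ INR n)) L /\ c <= L.

Definition Nconst (rho Lam : R) : nat :=
  Z.to_nat (Rceil (6 / rho * ln (IZR (Rceil (2 * Lam))))).

(* Main.v *)
Require Import Defs.
From Stdlib Require Import Reals List.
From Stdlib Require Import Lra Lia Classical ZArith.
Open Scope R_scope.
Lemma Rfloor_spec x : IZR (Rfloor x) <= x < IZR (Rfloor x) + 1.
Proof. unfold Rfloor. destruct (archimed x) as [H1 H2]. rewrite minus_IZR. lra. Qed.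

Lemma Rfrac_unit x : InUnit (Rfrac x).
Proof. unfold InUnit, Rfrac. pose proof (Rfloor_spec x). lra. Qed.

Lemma IZR_small z : -1 < IZR z < 1 -> z = 0%Z.
Proof. intros [H1 H2]. apply lt_IZR in H1. apply lt_IZR in H2. lia. Qed.

Lemma Rfloor_nonneg x : 0 <= x -> (0 <= Rfloor x)%Z.
Proof. intro H. pose proof (Rfloor_spec x). assert (-1 < IZR (Rfloor x)) by lra.
 apply lt_IZR in H1. lia. Qed.

Lemma ln_nonpos x : ~ 0 < x -> ln x = 0.
Proof. intro H. unfold ln. destruct (Rlt_dec 0 x); [contradiction|reflexivity]. Qed.

Lemma exp_le_mono x y : x <= y -> exp x <= exp y.
Proof. intro H. destruct (Req_dec x y). subst; lra. left; apply exp_increasing; lra. Qed.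

Lemma ln_le_mono x y : 0 < x -> x <= y -> ln x <= ln y.
Proof. intros H1 H2. destruct (Req_dec x y). subst; lra. left; apply ln_increasing; lra. Qed.

Lemma nat_unbounded x : exists k : nat, x < INR k.
Proof. destruct (archimed x) as [H1 H2]. exists (Z.to_nat (up x)).
 destruct (Z.le_gt_cases 0 (up x)).
 - rewrite INR_IZR_INZ, Z2Nat.id by lia. lra.
 - assert (IZR (up x) <= 0) by (apply IZR_le; lia). simpl. pose proof (pos_INR (Z.to_nat (up x))). lra. Qed.

Lemma exp_pow_INR x k : exp x ^ k = exp (INR k * x).
Proof. induction k. simpl. rewrite Rmult_0_l, exp_0. reflexivity.
 rewrite S_INR. simpl. rewrite IHk. rewrite <- exp_plus. f_equal. ring. Qed.

Definition peq_dec (p q : R * R) : {p = q} + {p <> q}.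
Proof. destruct p as [a b], q as [c d]. destruct (Req_dec_T a c); destruct (Req_dec_T b d).
 left; subst; reflexivity. all: right; intro H; inversion H; contradiction. Defined.

Lemma list_sum_map_add {A} (f g : A -> nat) (l : list A) :
  list_sum (map (fun x => (f x + g x)%nat) l) = (list_sum (map f l) + list_sum (map g l))%nat.
Proof. induction l; simpl; lia. Qed.

Lemma card_le {T} (P : T -> Prop) k L : has_card P k -> NoDup L -> (forall x, In x L -> P x) -> (length L <= k)%nat.
Proof. intros [L0 [H1 [H2 H3]]] H4 H5. rewrite <- H2. apply NoDup_incl_length; auto.
 intros x Hx. apply H3. auto. Qed.

Lemma indic_zero {K} (eqK : forall a b : K, {a = b} + {a <> b}) (x : K) (Ks : list K) :
  ~ In x Ks -> list_sum (map (fun k => if eqK x k then 1%nat else 0%nat) Ks) = 0%nat.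
Proof. induction Ks; simpl; intros; auto. destruct (eqK x a). subst; tauto. rewrite IHKs; auto. Qed.

Lemma indic_one {K} (eqK : forall a b : K, {a = b} + {a <> b}) (x : K) (Ks : list K) :
  NoDup Ks -> In x Ks -> list_sum (map (fun k => if eqK x k then 1%nat else 0%nat) Ks) = 1%nat.
Proof. induction Ks; simpl; intros Hn Hi. contradiction. inversion Hn; subst.
 destruct (eqK x a). subst. rewrite (indic_zero eqK); auto.
 destruct Hi. subst; contradiction. rewrite IHKs; auto. Qed.

Lemma sum_classes {A K} (eqK : forall a b : K, {a = b} + {a <> b}) (g : A -> K) (Ks : list K) (L : list A) :
  NoDup Ks -> (forall x, In x L -> In (g x) Ks) ->
  list_sum (map (fun k => length (filter (fun x => if eqK (g x) k then true else false) L)) Ks) = length L.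
Proof. intros HK. induction L as [|x L IH]; intros HL.
 - simpl. clear HK HL. induction Ks; simpl; auto.
 - simpl. transitivity (list_sum (map (fun k => ((if eqK (g x) k then 1 else 0) + length (filter (fun x0 : A => if eqK (g x0) k then true else false) L))%nat) Ks)).
   + f_equal. apply map_ext. intro k. destruct (eqK (g x) k); simpl; reflexivity.
   + rewrite list_sum_map_add. rewrite indic_one; auto. rewrite IH; auto. intros; apply HL; simpl; auto.
     apply HL; simpl; auto. Qed.

Lemma cover_sum {A J} (p : J -> A -> bool) (js : list J) (L : list A) :
  (forall x, In x L -> exists j, In j js /\ p j x = true) ->
  (length L <= list_sum (map (fun j => length (filter (p j) L)) js))%nat.
Proof. induction L as [|x L IH]; intros H; simpl. lia.
 transitivity (list_sum (map (fun j => ((if p j x then 1 else 0) + length (filter (p j) L))%nat) js)).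
 2:{ apply Nat.eq_le_incl. f_equal. apply map_ext. intro j. destruct (p j x); reflexivity. }
 rewrite list_sum_map_add. assert (1 <= list_sum (map (fun j => if p j x then 1%nat else 0%nat) js))%nat.
 { destruct (H x (or_introl eq_refl)) as [j [Hj Hp]]. clear IH H. induction js; simpl in *. contradiction.
   destruct Hj. subst. rewrite Hp. lia. specialize (IHjs H). lia. }
 specialize (IH (fun y Hy => H y (or_intror Hy))). lia. Qed.

Lemma list_max_exists {A} (c : A -> nat) (js : list A) : js <> nil ->
  exists j, In j js /\ forall j', In j' js -> (c j' <= c j)%nat.
Proof. induction js as [|a js IH]; intros H. congruence.
 destruct js as [|b js]. exists a; split; simpl; auto. intros j' [->|[]]; lia.
 destruct IH as [m [Hm Hmax]]. discriminate.
 destruct (le_lt_dec (c a) (c m)).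
 - exists m. split. right; auto. intros j' [->|Hj']; auto.
 - exists a. split. left; auto. intros j' [->|Hj']. lia. specialize (Hmax j' Hj'). lia. Qed.

Lemma sum_le_len {A} (c : A -> nat) (js : list A) m :
  (forall j, In j js -> (c j <= m)%nat) -> (list_sum (map c js) <= length js * m)%nat.
Proof. induction js; simpl; intros H. lia. specialize (H a (or_introl eq_refl)) as Ha.
 assert (list_sum (map c js) <= length js * m)%nat by (apply IHjs; auto). lia. Qed.

Lemma sum_le_len_R {A} (c : A -> nat) (js : list A) m :
  (forall j, In j js -> INR (c j) <= m) -> INR (list_sum (map c js)) <= INR (length js) * m.
Proof. induction js; intros H. simpl; lra. change (list_sum (map c (a :: js))) with (c a + list_sum (map c js))%nat. change (length (a :: js)) with (S (length js)). rewrite plus_INR, S_INR.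
 specialize (H a (or_introl eq_refl)) as Ha. assert (INR (list_sum (map c js)) <= INR (length js) * m) by (apply IHjs; intros j Hj; apply H; right; exact Hj). lra. Qed.

Lemma sum_filter_split {A} (c : A -> nat) (p : A -> bool) (l : list A) :
  list_sum (map c l) = (list_sum (map c (filter p l)) + list_sum (map c (filter (fun x => negb (p x)) l)))%nat.
Proof. induction l; simpl; auto. destruct (p a); simpl; lia. Qed.

Lemma NoDup_firstn' {A} (l : list A) k : NoDup l -> NoDup (firstn k l).
Proof. intro H. rewrite <- (firstn_skipn k l) in H. eapply NoDup_app_remove_r; eauto. Qed.

Lemma In_firstn' {A} (l : list A) k x : In x (firstn k l) -> In x l.
Proof. intro H. rewrite <- (firstn_skipn k l). apply in_or_app; auto. Qed.
Section Dyn.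
Variables (l : nat) (F dF tau dtau : R -> R) (lam Lam Rc M : R).
Hypothesis Hl : (2 <= l)%nat.
Hypothesis HF1 : forall x, F (x + 1) = F x + INR l.
Hypothesis HF0 : F 0 = 0.
Hypothesis HdF : forall x, derivable_pt_lim F x (dF x).
Hypothesis Hlam : 1 < lam.
Hypothesis HdFb : forall x, lam <= dF x <= Lam.
Hypothesis HM : M < Rc.
Hypothesis Hdtau : forall x, Rabs (dtau x) <= M.

Notation E := (Emap F).
Notation fm := (fmap F tau).
Notation theta := (thetaR Rc lam).

Lemma F_incr x y : x < y -> F x < F y.
Proof. intros Hxy. assert (pr : derivable F) by (intro t; exact (exist _ (dF t) (HdF t))).
 destruct (MVT_cor1 F x y pr Hxy) as [c [H1 H2]]. rewrite (derive_pt_eq_0 F c (dF c) (pr c) (HdF c)) in H1.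
 specialize (HdFb c). nra. Qed.

Lemma F_inj x y : F x = F y -> x = y.
Proof. intro H. destruct (Rtotal_order x y) as [h|[h|h]]; auto.
 apply F_incr in h; lra. apply F_incr in h; lra. Qed.

Lemma F_range y : InUnit y -> 0 <= F y < INR l.
Proof. intros [H1 H2]. assert (F 1 = INR l) by (rewrite <- (Rplus_0_l 1), HF1, HF0; ring).
 split. destruct (Req_dec y 0). subst; lra. left. rewrite <- HF0. apply F_incr; lra.
 rewrite <- H. apply F_incr; lra. Qed.

Lemma iterE_unit n y : InUnit y -> InUnit (Nat.iter n E y).
Proof. intro H. destruct n. exact H. simpl. apply Rfrac_unit. Qed.

Lemma iter_fm_fst n p : fst (Nat.iter n fm p) = Nat.iter n E (fst p).
Proof. induction n; simpl; auto. rewrite IHn. reflexivity. Qed.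

Lemma iter_fm_unit n p : InUnit (fst p) -> InUnit (snd p) ->
  InUnit (fst (Nat.iter n fm p)) /\ InUnit (snd (Nat.iter n fm p)).
Proof. intros H1 H2. destruct n. auto. simpl. split; apply Rfrac_unit. Qed.

Fixpoint Ssum (n : nat) (y : R) : R :=
  match n with O => 0 | S k => Ssum k y + tau (Nat.iter k E y) end.

Lemma iter_fm_snd n y s : exists z : Z, snd (Nat.iter n fm (y, s)) = s + Ssum n y + IZR z.
Proof. induction n. exists 0%Z. simpl. ring.
 destruct IHn as [z Hz]. exists (z - Rfloor (snd (Nat.iter n fm (y, s)) + tau (fst (Nat.iter n fm (y,s)))))%Z.
 change (Nat.iter (S n) fm (y, s)) with (fm (Nat.iter n fm (y, s))).
 unfold fmap at 1. simpl snd. unfold Rfrac. rewrite minus_IZR. rewrite iter_fm_fst in *. simpl fst in *.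
 rewrite Hz. simpl Ssum. ring. Qed.

Lemma s_inj n y s1 s2 : InUnit s1 -> InUnit s2 ->
  snd (Nat.iter n fm (y, s1)) = snd (Nat.iter n fm (y, s2)) -> s1 = s2.
Proof. intros [H1 H2] [H3 H4] H. destruct (iter_fm_snd n y s1) as [z1 E1]. destruct (iter_fm_snd n y s2) as [z2 E2].
 rewrite E1, E2 in H. assert (s1 - s2 = IZR (z2 - z1)) by (rewrite minus_IZR; lra).
 assert ((z2 - z1)%Z = 0%Z) by (apply IZR_small; lra). rewrite H5 in H0. simpl in H0. lra. Qed.

Definition wordof (n : nat) (y : R) : list nat :=
  map (fun i => Z.to_nat (Rfloor (F (Nat.iter i E y)))) (seq 0 n).

Lemma wordof_len n y : length (wordof n y) = n.
Proof. unfold wordof. rewrite length_map, length_seq. reflexivity. Qed.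

Lemma wordof_S n y : wordof (S n) y = Z.to_nat (Rfloor (F y)) :: wordof n (E y).
Proof. unfold wordof. simpl. f_equal. rewrite <- seq_shift, map_map. apply map_ext. intro i.
 rewrite Nat.iter_succ_r. reflexivity. Qed.

Lemma wordof_nth n y i : (i < n)%nat -> nth i (wordof n y) 0%nat = Z.to_nat (Rfloor (F (Nat.iter i E y))).
Proof. intro H. unfold wordof. set (f := fun i => Z.to_nat (Rfloor (F (Nat.iter i E y)))).
 rewrite (nth_indep _ _ (f 0%nat)) by (rewrite length_map, length_seq; auto).
 rewrite map_nth, seq_nth; auto. Qed.

Lemma code_inj n : forall y1 y2, InUnit y1 -> InUnit y2 -> Nat.iter n E y1 = Nat.iter n E y2 ->
  wordof n y1 = wordof n y2 -> y1 = y2.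
Proof. induction n; intros y1 y2 U1 U2 Hi Hw. exact Hi.
 rewrite !wordof_S in Hw. inversion Hw as [[Hh Ht]]. rewrite !Nat.iter_succ_r in Hi.
 assert (E y1 = E y2) by (apply IHn; auto; apply Rfrac_unit).
 unfold Emap, Rfrac in H. pose proof (F_range y1 U1). pose proof (F_range y2 U2).
 assert (G0 := Rfloor_nonneg _ (proj1 H0)). assert (G1 := Rfloor_nonneg _ (proj1 H1)).
 assert (H2 : Rfloor (F y1) = Rfloor (F y2)) by lia. rewrite H2 in H. apply F_inj. lra. Qed.

Lemma wordof_word n y : InUnit y -> is_word l n (wordof n y).
Proof. intro U. split. apply wordof_len. apply Forall_forall. intros a Ha. unfold wordof in Ha.
 apply in_map_iff in Ha. destruct Ha as [i [<- _]]. pose proof (F_range _ (iterE_unit i y U)) as [H1 H2].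
 pose proof (Rfloor_spec (F (Nat.iter i E y))). pose proof (Rfloor_nonneg _ H1).
 rewrite INR_IZR_INZ in H2. assert (IZR (Rfloor (F (Nat.iter i E y))) < IZR (Z.of_nat l)) by lra.
 apply lt_IZR in H3. lia. Qed.

Lemma wordof_xalpha n y : InUnit y -> is_x_alpha F (Nat.iter n E y) (wordof n y) y.
Proof. intro U. split; [exact U|]. rewrite wordof_len. split; [reflexivity|]. intros i Hi.
 rewrite wordof_nth by exact Hi. pose proof (iterE_unit i y U) as Ui. split; [exact Ui|].
 pose proof (F_range _ Ui) as [H1 H2]. pose proof (Rfloor_spec (F (Nat.iter i E y))). pose proof (Rfloor_nonneg _ H1).
 rewrite INR_IZR_INZ, Z2Nat.id by exact H0. lra. Qed.

Lemma wordof_trunc q n y : (q <= n)%nat -> trunc q (wordof n y) = wordof q (Nat.iter (n - q) E y).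
Proof. intro H. unfold trunc. apply nth_ext with (d := 0%nat) (d' := 0%nat).
 rewrite length_skipn, !wordof_len. lia.
 intros i Hi. rewrite length_skipn, wordof_len in Hi. rewrite nth_skipn, wordof_len.
 rewrite !wordof_nth by lia. rewrite <- Nat.iter_add. rewrite (Nat.add_comm (n - q) i). reflexivity. Qed.


Lemma mapply_mmul A B w : mapply (mmul A B) w = mapply A (mapply B w).
Proof. destruct A, B, w. unfold mapply, mmul. simpl. f_equal; ring. Qed.

Lemma Dfn_form n y : m11 (Dfn F dF dtau n y) = dEn F dF n y /\ m12 (Dfn F dF dtau n y) = 0 /\
  m22 (Dfn F dF dtau n y) = 1.
Proof. revert y. induction n; intro y. simpl. auto.
 simpl. destruct (IHn (E y)) as [H1 [H2 H3]]. rewrite H1, H2, H3. repeat split; ring. Qed.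

Lemma dEn_bounds n y : lam ^ n <= dEn F dF n y <= Lam ^ n.
Proof. revert y. induction n; intro y. simpl. lra. simpl. destruct (IHn (E y)) as [H1 H2].
 specialize (HdFb y). assert (0 <= lam ^ n) by (apply pow_le; lra). nra. Qed.

Lemma dEn_pos n y : 0 < dEn F dF n y.
Proof. pose proof (dEn_bounds n y). assert (0 < lam ^ n) by (apply pow_lt; lra). lra. Qed.

Lemma mapply_Dfn_S n y w : mapply (Dfn F dF dtau (S n) y) w = mapply (Dfn F dF dtau n (E y)) (mapply (Dfmat dF dtau y) w).
Proof. simpl. apply mapply_mmul. Qed.

Lemma mapply_Dfn_add a b y w : mapply (Dfn F dF dtau (a + b) y) w =
  mapply (Dfn F dF dtau a (Nat.iter b E y)) (mapply (Dfn F dF dtau b y) w).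
Proof. revert y w. induction b; intros y w.
 - rewrite Nat.add_0_r. simpl. destruct w. unfold mapply. simpl. f_equal; ring.
 - rewrite Nat.add_succ_r, !mapply_Dfn_S, IHb. rewrite Nat.iter_succ_r. reflexivity. Qed.

Lemma theta_pos : 0 < theta.
Proof. unfold thetaR. pose proof (Hdtau 0). pose proof (Rabs_pos (dtau 0)).
 apply Rdiv_lt_0_compat; lra. Qed.

Lemma cone_Dfmat y w : cone theta w -> cone theta (mapply (Dfmat dF dtau y) w).
Proof. destruct w as [w1 w2]. unfold cone, mapply, Dfmat. simpl. intro H.
 assert (Ht : theta * (lam - 1) = Rc) by (unfold thetaR; field; lra).
 pose proof theta_pos. specialize (HdFb y). specialize (Hdtau y).
 replace (dF y * w1 + 0 * w2) with (dF y * w1) by ring. replace (dtau y * w1 + 1 * w2) with (dtau y * w1 + w2) by ring.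
 rewrite Rabs_mult, (Rabs_pos_eq (dF y)) by lra.
 pose proof (Rabs_triang (dtau y * w1) w2). rewrite Rabs_mult in H1. pose proof (Rabs_pos w1). pose proof (Rabs_pos (dtau y)).
 set (A := Rabs w1) in *.
 assert (h1 : Rabs (dtau y) * A <= M * A) by (apply Rmult_le_compat_r; lra).
 assert (h2 : M * A <= Rc * A) by (apply Rmult_le_compat_r; lra).
 assert (h3 : theta * lam * A <= theta * dF y * A) by (apply Rmult_le_compat_r; [lra|]; apply Rmult_le_compat_l; lra).
 assert (h4 : Rc * A = theta * lam * A - theta * A) by (transitivity (theta * (lam - 1) * A); [rewrite Ht; reflexivity | ring]).
 lra. Qed.

Lemma cone_Dfn n y w : cone theta w -> cone theta (mapply (Dfn F dF dtau n y) w).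
Proof. revert y w. induction n; intros y w H.
 - destruct w. unfold mapply, cone in *. simpl in *. replace (1 * r + 0 * r0) with r by ring.
   replace (0 * r + 1 * r0) with r0 by ring. exact H.
 - rewrite mapply_Dfn_S. apply IHn. apply cone_Dfmat. exact H. Qed.

Definition pre (A : mat2) (v : R * R) : R * R :=
  (fst v / m11 A, snd v - m21 A * (fst v / m11 A)).

Definition nrm (p : R * R) : R * R :=
  (fst p / sqrt (fst p ^ 2 + snd p ^ 2), snd p / sqrt (fst p ^ 2 + snd p ^ 2)).

Lemma sq_pos a b : (a, b) <> (0, 0) -> 0 < a ^ 2 + b ^ 2.
Proof. intro H. destruct (Req_dec a 0). destruct (Req_dec b 0). subst; congruence.
 destruct (Rdichotomy _ _ H1); nra. destruct (Rdichotomy _ _ H0); nra. Qed.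

Lemma nrm_unit p : p <> (0, 0) -> unit_vec (nrm p).
Proof. destruct p as [a b]. intro H. unfold unit_vec, nrm. cbn [fst snd].
 pose proof (sq_pos a b H) as Hp. pose proof (sqrt_lt_R0 _ Hp) as Hk. pose proof (sqrt_sqrt _ (Rlt_le _ _ Hp)) as Hs.
 set (k := sqrt (a ^ 2 + b ^ 2)) in *.
 replace ((a / k) ^ 2 + (b / k) ^ 2) with ((a ^ 2 + b ^ 2) / (k * k)) by (field; lra).
 rewrite Hs. field. lra. Qed.

Lemma pre_correct A u v : m12 A = 0 -> m22 A = 1 -> m11 A <> 0 -> mapply A u = v -> u = pre A v.
Proof. destruct A, u as [u1 u2], v as [v1 v2]. unfold mapply, pre. simpl. intros -> -> Hd H. inversion H.
 f_equal; field; auto. Qed.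

Lemma pre_nonzero A v : m11 A <> 0 -> unit_vec v -> pre A v <> (0, 0).
Proof. destruct v as [v1 v2]. unfold unit_vec, pre. cbn [fst snd]. intros Hd Hu H. inversion H as [[H1 H2]].
 assert (v1 = 0). { replace v1 with (v1 / m11 A * m11 A) by (field; auto). rewrite H1; ring. }
 rewrite H0 in H2. assert (v2 = 0) by lra. subst. simpl in Hu. lra. Qed.

Notation good := (good_preimage F tau dF dtau theta).

Lemma img_split a b y v : unit_vec v -> in_img_cone (Dfn F dF dtau (a + b) y) theta v ->
  in_img_cone (Dfn F dF dtau a (Nat.iter b E y)) theta v /\
  in_img_cone (Dfn F dF dtau b y) theta (nrm (pre (Dfn F dF dtau a (Nat.iter b E y)) v)).
Proof. intros Hu [w [Hc Hv]]. rewrite mapply_Dfn_add in Hv. split.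
 - exists (mapply (Dfn F dF dtau b y) w). split; auto. apply cone_Dfn; auto.
 - destruct (Dfn_form a (Nat.iter b E y)) as [D1 [D2 D3]].
   assert (Hu' := pre_correct _ _ _ D2 D3 ltac:(rewrite D1; pose proof (dEn_pos a (Nat.iter b E y)); lra) (eq_sym Hv)).
   pose proof (pre_nonzero (Dfn F dF dtau a (Nat.iter b E y)) v ltac:(rewrite D1; pose proof (dEn_pos a (Nat.iter b E y)); lra) Hu) as Hnz. rewrite <- Hu' in Hnz |- *.
   destruct w as [w1 w2]. set (u := mapply (Dfn F dF dtau b y) (w1, w2)) in *.
   assert (Hk : 0 < sqrt (fst u ^ 2 + snd u ^ 2)) by (apply sqrt_lt_R0; apply sq_pos; rewrite <- surjective_pairing; exact Hnz).
   unfold nrm. remember (sqrt (fst u ^ 2 + snd u ^ 2)) as k eqn:Hkd. exists (w1 / k, w2 / k). split.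
   + unfold cone in *. simpl in *. unfold Rdiv. rewrite !Rabs_mult. pose proof (Rabs_pos (/ k)). nra.
   + unfold u. destruct (Dfn F dF dtau b y). unfold mapply. simpl. f_equal; field; lra.
Qed.

Lemma good_split a b z v zeta : unit_vec v -> good (a + b) z v zeta ->
  good a z v (Nat.iter b fm zeta) /\
  good b (Nat.iter b fm zeta) (nrm (pre (Dfn F dF dtau a (fst (Nat.iter b fm zeta))) v)) zeta.
Proof. intros Hu [U1 [U2 [Hz Hc]]]. rewrite iter_fm_fst.
 destruct (img_split a b (fst zeta) v Hu Hc) as [C1 C2].
 destruct (iter_fm_unit b zeta U1 U2) as [W1 W2]. split.
 - split; [exact W1|]. split; [exact W2|]. split. rewrite <- Nat.iter_add. exact Hz. rewrite iter_fm_fst. exact C1.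
 - split; [exact U1|]. split; [exact U2|]. split; [reflexivity|]. exact C2. Qed.

Lemma good_inj n z v z1 z2 : good n z v z1 -> good n z v z2 ->
  wordof n (fst z1) = wordof n (fst z2) -> z1 = z2.
Proof. destruct z1 as [y1 s1], z2 as [y2 s2]. intros [A1 [B1 [C1 _]]] [A2 [B2 [C2 _]]] Hw. simpl in *.
 assert (y1 = y2). { apply (code_inj n); auto. pose proof (f_equal fst C1) as G1. pose proof (f_equal fst C2) as G2.
   rewrite iter_fm_fst in G1, G2. simpl in G1, G2. congruence. }
 subst y2. f_equal. apply (s_inj n y1); auto. rewrite C1, C2. reflexivity. Qed.

Lemma good_word n z v zeta : good n z v zeta -> is_word l n (wordof n (fst zeta)).
Proof. intros [U _]. apply wordof_word; auto. Qed.

Fixpoint allw (n : nat) : list (list nat) :=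
  match n with O => nil :: nil | S k => flat_map (fun a => map (cons a) (allw k)) (seq 0 l) end.

Lemma allw_complete n w : is_word l n w -> In w (allw n).
Proof. revert w. induction n; intros w [Hlen Hf].
 - destruct w; [left; reflexivity | discriminate].
 - destruct w as [|a w]; [discriminate|]. simpl. apply in_flat_map. inversion Hf; subst. exists a. split.
   apply in_seq. lia. apply in_map. apply IHn. split; auto. Qed.

Lemma NoDup_map_cons (a : nat) (W : list (list nat)) : NoDup W -> NoDup (map (cons a) W).
Proof. induction 1; simpl; constructor; auto. intro H1. apply in_map_iff in H1. destruct H1 as [x0 [Hx Hi]].
 inversion Hx; subst; contradiction. Qed.

Lemma NoDup_fm (S : list nat) (W : list (list nat)) : NoDup S -> NoDup W ->
  NoDup (flat_map (fun a => map (cons a) W) S).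
Proof. induction 1; intros HW; simpl. constructor. apply NoDup_app. apply NoDup_map_cons; auto. auto.
 intros w H1 H2. apply in_map_iff in H1. destruct H1 as [w' [<- _]]. apply in_flat_map in H2.
 destruct H2 as [b [Hb Hw]]. apply in_map_iff in Hw. destruct Hw as [w'' [Heq _]]. inversion Heq; subst. contradiction. Qed.

Lemma allw_nodup n : NoDup (allw n).
Proof. induction n; simpl. constructor. auto. constructor. apply NoDup_fm; auto. apply seq_NoDup. Qed.

Lemma allw_len n : length (allw n) = (l ^ n)%nat.
Proof. induction n; simpl. reflexivity. rewrite (flat_map_constant_length (c := length (allw n))).
 rewrite length_seq, IHn. reflexivity. intros. rewrite length_map. reflexivity. Qed.

Lemma good_card n z v : exists k, has_card (good n z v) k.
Proof.
 assert (forall Ws, exists L, NoDup L /\ forall zeta, In zeta L <-> good n z v zeta /\ In (wordof n (fst zeta)) Ws).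
 { induction Ws as [|al Ws IH].
   - exists nil. split. constructor. intros zeta; simpl; tauto.
   - destruct IH as [L [ND HL]].
     destruct (classic (exists zeta, good n z v zeta /\ wordof n (fst zeta) = al /\ ~ In zeta L)) as [[z0 [G0 [W0 N0]]]|NE].
     + exists (z0 :: L). split. constructor; auto. intro zeta. simpl. split.
       * intros [<-|H]. split; auto. apply HL in H. tauto.
       * intros [G [Hw|Hw]].
         destruct (classic (In zeta L)). right; auto. left. apply (good_inj n z v); auto. congruence.
         right. apply HL. auto.
     + exists L. split; auto. intro zeta. simpl. split.
       * intro H. apply HL in H. tauto.
       * intros [G [Hw|Hw]]. apply NNPP. intro H. apply NE. exists zeta. auto. apply HL; auto. }
 destruct (H (allw n)) as [L [ND HL]]. exists (length L). exists L. split; auto. split; auto.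
 intro p. rewrite HL. split. tauto. intro G. split; auto. apply allw_complete. eapply good_word; eauto. Qed.

Notation Nc := (Ncounts F tau dF dtau theta).

Lemma Nc_elem_le n N z v k : is_lub (Nc n) N -> InUnit (fst z) -> InUnit (snd z) -> unit_vec v ->
  has_card (good n z v) k -> INR k <= N.
Proof. intros [Hub _] U1 U2 Hv Hk. apply Hub. exists z, v, k. tauto. Qed.

Lemma lub_nonneg n N : is_lub (Nc n) N -> 0 <= N.
Proof. intro H. destruct (good_card n (0, 0) (1, 0)) as [k Hk].
 assert (INR k <= N). apply (Nc_elem_le n N (0,0) (1,0)); auto. split; simpl; lra. split; simpl; lra.
 unfold unit_vec; simpl; lra. pose proof (pos_INR k). lra. Qed.

Lemma submult a b Na Nb Nab : is_lub (Nc a) Na -> is_lub (Nc b) Nb -> is_lub (Nc (a + b)) Nab -> Nab <= Na * Nb.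
Proof. intros Ha Hb Hab. apply (proj2 Hab). intros c [z [v [k [Uz1 [Uz2 [Uv [Hk ->]]]]]]].
 destruct Hk as [L [ND [Len HL]]]. destruct (good_card a z v) as [ka Hka].
 pose proof (Nc_elem_le a Na z v ka Ha Uz1 Uz2 Uv Hka) as Hka'.
 destruct Hka as [W [NDW [LW HW]]].
 pose proof (sum_classes peq_dec (fun zeta => Nat.iter b fm zeta) W L NDW) as Hs.
 rewrite <- Len, <- Hs.
 2:{ intros x Hx. apply HW. apply HL in Hx. apply (good_split a b z v x Uv Hx). }
 pose proof (lub_nonneg b Nb Hb).
 apply Rle_trans with (INR (length W) * Nb). 2:{ rewrite LW. apply Rmult_le_compat_r; auto. }
 apply sum_le_len_R. intros w Hw. apply HW in Hw.
 set (u := nrm (pre (Dfn F dF dtau a (fst w)) v)).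
 destruct (good_card b w u) as [kw Hkw].
 destruct Hw as [Wu1 [Wu2 _]].
 assert (unit_vec u). { apply nrm_unit. apply pre_nonzero; auto. destruct (Dfn_form a (fst w)) as [D1 _]. rewrite D1.
   pose proof (dEn_pos a (fst w)). lra. }
 apply Rle_trans with (INR kw). 2:{ apply (Nc_elem_le b Nb w u kw); auto. }
 apply le_INR. apply (card_le _ _ _ Hkw). apply NoDup_filter; auto.
 intros x Hx. apply filter_In in Hx. destruct Hx as [Hx Hf]. destruct (peq_dec (Nat.iter b fm x) w); [|discriminate].
 apply HL in Hx. destruct (good_split a b z v x Uv Hx) as [_ G]. rewrite e in G. exact G. Qed.

Section Growth.
Variables (Nseq : nat -> R) (Lm rho : R).
Hypothesis HN : forall n, is_lub (Nc n) (Nseq n).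
Hypothesis Hcv : Un_cv (fun n => Rpower (Nseq n) (/ INR n)) Lm.
Hypothesis HLm : exp rho <= Lm.
Hypothesis Hrho : 0 < rho.

Lemma Nseq_nonneg n : 0 <= Nseq n.
Proof. exact (lub_nonneg n _ (HN n)). Qed.

Lemma Nseq_mult k n : (1 <= k)%nat -> Nseq (k * n) <= Nseq n ^ k.
Proof. induction k; intro H. lia. destruct k. rewrite Nat.mul_1_l. simpl. lra.
 rewrite Nat.mul_succ_l. pose proof (submult _ _ _ _ _ (HN (S k * n)) (HN n) (HN (S k * n + n))).
 specialize (IHk ltac:(lia)). pose proof (Nseq_nonneg n).
 apply Rle_trans with (Nseq (S k * n) * Nseq n); auto.
 change (Nseq n ^ S (S k)) with (Nseq n * Nseq n ^ S k). rewrite Rmult_comm. apply Rmult_le_compat_l; auto. Qed.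

Lemma Nseq_lower n : (1 <= n)%nat -> exp (rho * INR n) <= Nseq n.
Proof. intro Hn. apply Rnot_lt_le. intro Hc. set (c := Nseq n) in *. pose proof (Nseq_nonneg n) as Hc0. fold c in Hc0.
 assert (Hn' : 0 < INR n) by (apply lt_0_INR; lia).
 set (Mx := Rmax 1 (exp (ln c / INR n))).
 assert (HMx : Mx < exp rho).
 { apply Rmax_lub_lt. rewrite <- exp_0. apply exp_increasing. lra.
   apply exp_increasing. assert (ln c < rho * INR n).
   { destruct (Rlt_dec 0 c). rewrite <- (ln_exp (rho * INR n)). apply ln_increasing; auto.
     rewrite ln_nonpos by auto. nra. }
   unfold Rdiv. apply Rmult_lt_reg_r with (INR n); auto. rewrite Rmult_assoc, Rinv_l, Rmult_1_r by lra. lra. }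
 assert (Hsub : forall k, (1 <= k)%nat -> Rpower (Nseq (k * n)) (/ INR (k * n)) <= Mx).
 { intros k Hk. unfold Rpower. destruct (Rlt_dec 0 (Nseq (k * n))) as [Hp|Hp].
   - pose proof (Nseq_mult k n Hk) as Hm. fold c in Hm.
     assert (Hcp : 0 < c). { destruct (Rlt_dec 0 c); auto. assert (c = 0) by lra. rewrite H in Hm.
       rewrite pow_i in Hm by lia. lra. }
     assert (Hl1 : ln (Nseq (k * n)) <= INR k * ln c). { rewrite <- ln_pow by auto. apply ln_le_mono; auto. }
     apply Rle_trans with (exp (ln c / INR n)). 2: apply Rmax_r.
     apply exp_le_mono. rewrite mult_INR. assert (Hk' : 0 < INR k) by (apply lt_0_INR; lia).
     replace (ln c / INR n) with (/ (INR k * INR n) * (INR k * ln c)) by (field; lra).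
     apply Rmult_le_compat_l; auto. left. apply Rinv_0_lt_compat. nra.
   - rewrite (ln_nonpos _ Hp), Rmult_0_r, exp_0. apply Rmax_l. }
 destruct (Hcv (Lm - Mx)) as [N0 HN0]. lra.
 specialize (HN0 (S N0 * n)%nat ltac:(nia)). unfold R_dist in HN0. apply Rabs_def2 in HN0.
 specialize (Hsub (S N0) ltac:(lia)). lra. Qed.

Lemma choose_n q m : (1 <= q)%nat -> exists n, (m <= n)%nat /\ (q + 1 <= n)%nat /\
  exp (INR q * rho / 2) * Nseq (n - q) <= Nseq n.
Proof. intro Hq. apply NNPP. intro H. set (n0 := (m + q + 1)%nat). set (e := exp (INR q * rho / 2)).
 assert (Hall : forall n, (n0 <= n)%nat -> Nseq n < e * Nseq (n - q)).
 { intros n Hn. apply Rnot_le_lt. intro H'. apply H. exists n. split. lia. split. lia. exact H'. }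
 assert (He : 0 < e) by apply exp_pos.
 assert (Hk : forall k, Nseq (n0 + k * q) <= e ^ k * Nseq n0).
 { induction k. rewrite Nat.mul_0_l, Nat.add_0_r. simpl. lra.
   replace (n0 + S k * q)%nat with (n0 + k * q + q)%nat by lia.
   pose proof (Hall (n0 + k * q + q)%nat ltac:(lia)) as H1. replace (n0 + k * q + q - q)%nat with (n0 + k * q)%nat in H1 by lia.
   simpl. apply Rmult_le_compat_l with (r := e) in IHk; lra. }
 set (N0 := Nseq n0). destruct (nat_unbounded (2 * N0 / rho)) as [k Hkb].
 specialize (Hk k). pose proof (Nseq_lower (n0 + k * q) ltac:(lia)) as Hlo.
 unfold e in Hk. rewrite exp_pow_INR in Hk. rewrite plus_INR, mult_INR in Hlo.
 set (X := exp (INR k * (INR q * rho / 2))) in *.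
 assert (HX : exp (rho * (INR n0 + INR k * INR q)) = exp (rho * INR n0) * (X * X)).
 { unfold X. rewrite <- !exp_plus. f_equal. field. }
 assert (H1 : 1 <= exp (rho * INR n0)). { rewrite <- exp_0. apply exp_le_mono. pose proof (pos_INR n0). nra. }
 assert (HX0 : 0 < X) by apply exp_pos.
 assert (X * X <= X * N0). { apply Rle_trans with (exp (rho * INR n0) * (X * X)). nra. rewrite <- HX. unfold N0. lra. }
 assert (X <= N0) by nra.
 assert (Hq' : 1 <= INR q) by (apply (le_INR 1); lia).
 assert (N0 < INR k * (INR q * rho / 2)).
 { assert (2 * N0 < INR k * rho). { apply (Rmult_lt_compat_r rho) in Hkb; auto. unfold Rdiv in Hkb.
     rewrite Rmult_assoc, Rinv_l, Rmult_1_r in Hkb by lra. lra. }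
   pose proof (pos_INR k). nra. }
 assert (1 + INR k * (INR q * rho / 2) <= X). { unfold X. destruct (Req_dec (INR k * (INR q * rho / 2)) 0).
   rewrite H4, exp_0. lra. left. apply exp_ineq1; auto. }
 lra. Qed.

End Growth.

Lemma lub_attained n N : is_lub (Nc n) N -> exists z v k, InUnit (fst z) /\ InUnit (snd z) /\ unit_vec v /\
  has_card (good n z v) k /\ N = INR k.
Proof. intro H. destruct (classic (exists c, Nc n c /\ N - 1 < c)) as [[c [Hc Hlt]]|NE].
 - pose proof Hc as Hc'. destruct Hc as [z [v [k [U1 [U2 [Uv [Hk ->]]]]]]]. exists z, v, k. do 4 (split; auto).
   apply Rle_antisym. apply (proj2 H). intros c' Hc''. pose proof (proj1 H c' Hc'') as Hle.
   destruct Hc'' as [z' [v' [k' [_ [_ [_ [_ ->]]]]]]]. assert (INR k' <= N) by exact Hle.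
   assert (INR k' < INR (k + 1)) by (rewrite plus_INR; simpl; lra). apply INR_lt in H1. apply le_INR. lia.
   apply (proj1 H). exact Hc'.
 - exfalso. assert (N <= N - 1). apply (proj2 H). intros c Hc. apply Rnot_lt_le. intro. apply NE. exists c. auto.
   lra. Qed.

Lemma allw_sound n w : In w (allw n) -> is_word l n w.
Proof. revert w. induction n; simpl; intros w Hw.
 - destruct Hw as [<-|[]]. split; auto.
 - apply in_flat_map in Hw. destruct Hw as [a [Ha Hw]]. apply in_map_iff in Hw. destruct Hw as [w' [<- Hw']].
   apply IHn in Hw'. destruct Hw' as [H1 H2]. apply in_seq in Ha. split. simpl; auto. constructor; auto. lia. Qed.

Lemma NoDup_map_on {A B} (f : A -> B) (L : list A) : NoDup L ->
  (forall x y, In x L -> In y L -> f x = f y -> x = y) -> NoDup (map f L).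
Proof. induction 1 as [|x L Hx ND IH]; intros Hi; simpl; constructor.
 - intro H. apply in_map_iff in H. destruct H as [y [Hy Hy']]. assert (y = x) by (apply Hi; simpl; auto). subst; contradiction.
 - apply IH. intros; apply Hi; simpl; auto. Qed.

Lemma main_step (rho : R) (q J K n : nat) (a b : nat -> R) (z v : R * R) (k : nat) (Nnq : R) :
  (1 <= q)%nat -> (q + 1 <= n)%nat ->
  (forall t, ln lam <= t <= ln Lam -> exists j, (1 <= j <= J)%nat /\ a j < t < b j) ->
  INR (2 * (q + 1) * K) < exp (INR q * rho / 2) / (2 * INR J) ->
  is_lub (Nc (n - q)) Nnq -> 0 < Nnq ->
  InUnit (fst z) -> InUnit (snd z) -> unit_vec v -> has_card (good n z v) k ->
  exp (rho * INR n) <= INR k -> exp (INR q * rho / 2) * Nnq <= INR k ->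
  exists (j : nat) (B : list (list nat)) (Sig : list nat -> list (list nat)),
      (1 <= j <= J)%nat /\
      NoDup B /\ length B = (2 * (q + 1) * K)%nat /\
      forall beta, In beta B ->
        is_word l q beta /\ NoDup (Sig beta) /\
        INR (length (Sig beta)) >= exp (rho * INR n) / INR l ^ q / (2 * INR J) /\
        forall alpha, In alpha (Sig beta) ->
          is_word l n alpha /\ trunc q alpha = beta /\
          exists y, is_x_alpha F (fst z) alpha y /\
            in_img_cone (Dfn F dF dtau n y) theta v /\
            exp (a j * INR n) <= dEn F dF n y <= exp (b j * INR n).
Proof.
 intros Hq Hn Hcov HK HNq HNq0 Uz1 Uz2 Uv Hk Hlow Hgrow.
 assert (HJ : (1 <= J)%nat).
 { destruct (Hcov (ln lam)) as [j [Hj _]]. specialize (HdFb 0). split. lra. apply ln_le_mono; lra. lia. }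
 assert (HJ' : 0 < INR J) by (apply lt_0_INR; lia).
 destruct Hk as [L [ND [Len HL]]].
 set (pj := fun j (zeta : R * R) => if Rle_dec (exp (a j * INR n)) (dEn F dF n (fst zeta)) then
        (if Rle_dec (dEn F dF n (fst zeta)) (exp (b j * INR n)) then true else false) else false).
 assert (Hcover : forall zeta, In zeta L -> exists j, In j (seq 1 J) /\ pj j zeta = true).
 { intros zeta _. set (d := dEn F dF n (fst zeta)). pose proof (dEn_bounds n (fst zeta)) as [D1 D2]. fold d in D1, D2.
   assert (Hn0 : 0 < INR n) by (apply lt_0_INR; lia).
   assert (Hl0 : 0 < lam ^ n) by (apply pow_lt; lra).
   assert (Hd : 0 < d) by lra.
   assert (T1 : INR n * ln lam <= ln d) by (rewrite <- ln_pow by lra; apply ln_le_mono; lra).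
   assert (T2 : ln d <= INR n * ln Lam) by (rewrite <- ln_pow by (specialize (HdFb 0); lra); apply ln_le_mono; lra).
   destruct (Hcov (ln d / INR n)) as [j [Hj [A1 A2]]].
   { split; unfold Rdiv; apply Rmult_le_reg_r with (INR n); auto; rewrite Rmult_assoc, Rinv_l, Rmult_1_r by lra; lra. }
   exists j. split. apply in_seq. lia.
   assert (B1 : a j * INR n < ln d). { apply Rmult_lt_compat_r with (r := INR n) in A1; auto. unfold Rdiv in A1.
     rewrite Rmult_assoc, Rinv_l, Rmult_1_r in A1 by lra. exact A1. }
   assert (B2 : ln d < b j * INR n). { apply Rmult_lt_compat_r with (r := INR n) in A2; auto. unfold Rdiv in A2.
     rewrite Rmult_assoc, Rinv_l, Rmult_1_r in A2 by lra. exact A2. }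
   apply exp_increasing in B1. apply exp_increasing in B2. rewrite exp_ln in B1, B2 by auto.
   unfold pj. fold d. destruct (Rle_dec (exp (a j * INR n)) d); [|lra]. destruct (Rle_dec d (exp (b j * INR n))); [|lra].
   reflexivity. }
 pose proof (cover_sum pj (seq 1 J) L Hcover) as Hcs.
 destruct (list_max_exists (fun j => length (filter (pj j) L)) (seq 1 J)) as [jm [Hjm Hmax]].
 { destruct J. lia. simpl. discriminate. }
 pose proof (sum_le_len (fun j => length (filter (pj j) L)) (seq 1 J) _ Hmax) as Hsl.
 rewrite length_seq in Hsl. simpl in Hsl.
 set (Lj := filter (pj jm) L) in *.
 assert (HkLj : (k <= J * length Lj)%nat) by lia.
 set (g := fun zeta : R * R => wordof q (Nat.iter (n - q) E (fst zeta))).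
 set (W := allw q).
 set (Cb := fun beta => filter (fun zeta => if list_eq_dec Nat.eq_dec (g zeta) beta then true else false) Lj).
 assert (HLjL : forall zeta, In zeta Lj -> In zeta L) by (intros zeta H; apply filter_In in H; tauto).
 assert (HCb : forall beta zeta, In zeta (Cb beta) -> In zeta Lj /\ g zeta = beta).
 { intros beta zeta H. apply filter_In in H. destruct H as [H1 H2]. split; auto.
   destruct (list_eq_dec Nat.eq_dec (g zeta) beta); auto; discriminate. }
 assert (Hsum : list_sum (map (fun beta => length (Cb beta)) W) = length Lj).
 { apply sum_classes. apply allw_nodup. intros zeta Hz. apply allw_complete. apply wordof_word.
   apply iterE_unit. apply HLjL, HL in Hz. exact (proj1 Hz). }
 assert (Hn_eq : n = (q + (n - q))%nat) by lia.
 assert (Hbound : forall beta, INR (length (Cb beta)) <= Nnq).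
 { intro beta. destruct (Cb beta) as [|z0 rest] eqn:HC. simpl. lra.
   assert (Hz0 : In z0 (Cb beta)) by (rewrite HC; left; auto). rewrite <- HC.
   set (w0 := Nat.iter (n - q) fm z0). set (u := nrm (pre (Dfn F dF dtau q (fst w0)) v)).
   assert (Hsplit : forall zeta, In zeta (Cb beta) -> good q z v (Nat.iter (n - q) fm zeta) /\
        good (n - q) (Nat.iter (n - q) fm zeta) (nrm (pre (Dfn F dF dtau q (fst (Nat.iter (n - q) fm zeta))) v)) zeta /\
        wordof q (fst (Nat.iter (n - q) fm zeta)) = beta).
   { intros zeta Hz. destruct (HCb _ _ Hz) as [Hz1 Hz2]. apply HLjL, HL in Hz1. rewrite Hn_eq in Hz1.
     destruct (good_split q (n - q) z v zeta Uv Hz1) as [G1 G2]. split; auto. split; auto.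
     rewrite iter_fm_fst. exact Hz2. }
   assert (Hsame : forall zeta, In zeta (Cb beta) -> Nat.iter (n - q) fm zeta = w0).
   { intros zeta Hz. destruct (Hsplit zeta Hz) as [G1 [_ G3]]. destruct (Hsplit z0 Hz0) as [G1' [_ G3']].
     apply (good_inj q z v); auto. unfold w0; congruence. }
   destruct (Hsplit z0 Hz0) as [[W1 [W2 _]] _]. fold w0 in W1, W2.
   assert (Uu : unit_vec u). { apply nrm_unit. apply pre_nonzero; auto. destruct (Dfn_form q (fst w0)) as [D1 _].
     rewrite D1. pose proof (dEn_pos q (fst w0)). lra. }
   destruct (good_card (n - q) w0 u) as [kw Hkw].
   apply Rle_trans with (INR kw). 2:{ apply (Nc_elem_le (n - q) Nnq w0 u kw); auto. }
   apply le_INR. apply (card_le _ _ _ Hkw). apply NoDup_filter, NoDup_filter; auto.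
   intros zeta Hz. destruct (Hsplit zeta Hz) as [_ [G2 _]]. rewrite (Hsame zeta Hz) in G2. exact G2. }
 set (thr := exp (rho * INR n) / INR l ^ q / (2 * INR J)).
 assert (Hlq : 0 < INR l ^ q) by (apply pow_lt; apply lt_0_INR; lia).
 assert (Hthr : INR (l ^ q) * thr = exp (rho * INR n) / (2 * INR J)).
 { unfold thr. rewrite pow_INR. field. lra. }
 set (pbig := fun beta => if Rle_dec thr (INR (length (Cb beta))) then true else false).
 set (big := filter pbig W).
 pose proof (sum_filter_split (fun beta => length (Cb beta)) pbig W) as Hsplit. rewrite Hsum in Hsplit.
 assert (Hsmall : INR (list_sum (map (fun beta => length (Cb beta)) (filter (fun x => negb (pbig x)) W))) <=
     exp (rho * INR n) / (2 * INR J)).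
 { rewrite <- Hthr. apply Rle_trans with (INR (length (filter (fun x => negb (pbig x)) W)) * thr).
   apply sum_le_len_R. intros beta Hb. apply filter_In in Hb. destruct Hb as [_ Hb]. unfold pbig in Hb.
   destruct (Rle_dec thr (INR (length (Cb beta)))); [discriminate|lra].
   apply Rmult_le_compat_r. unfold thr. apply Rmult_le_pos. apply Rmult_le_pos. left; apply exp_pos.
   left; apply Rinv_0_lt_compat; auto. left; apply Rinv_0_lt_compat; lra.
   apply le_INR. rewrite <- (allw_len q). apply filter_length_le. }
 assert (Hbigs : INR (list_sum (map (fun beta => length (Cb beta)) big)) <= INR (length big) * Nnq).
 { apply sum_le_len_R. intros; apply Hbound. }
 assert (Hbig : INR (2 * (q + 1) * K) < INR (length big)).
 { apply Rlt_le_trans with (exp (INR q * rho / 2) / (2 * INR J)); auto.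
   apply le_INR in HkLj. rewrite mult_INR in HkLj. rewrite Hsplit, plus_INR in HkLj. fold big in HkLj.
   set (Sb := INR (list_sum (map (fun beta => length (Cb beta)) big))) in *.
   set (Ss := INR (list_sum (map (fun beta => length (Cb beta)) (filter (fun x => negb (pbig x)) W)))) in *.
   set (ee := exp (rho * INR n)) in *. set (JJ := INR J) in *. set (kk := INR k) in *.
   assert (E1 : JJ * Ss <= ee / 2). { apply Rmult_le_compat_l with (r := JJ) in Hsmall; [|lra].
     replace (JJ * (ee / (2 * JJ))) with (ee / 2) in Hsmall by (field; lra). exact Hsmall. }
   assert (E2 : kk / 2 <= JJ * Sb) by lra.
   assert (E3 : exp (INR q * rho / 2) * Nnq / 2 <= JJ * (INR (length big) * Nnq)).
   { apply Rle_trans with (JJ * Sb). lra. apply Rmult_le_compat_l; lra. }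
   assert (E4 : exp (INR q * rho / 2) / 2 <= JJ * INR (length big)).
   { apply Rmult_le_reg_r with Nnq; auto. replace (exp (INR q * rho / 2) / 2 * Nnq) with (exp (INR q * rho / 2) * Nnq / 2) by field.
     rewrite Rmult_assoc. exact E3. }
   apply Rmult_le_reg_l with (2 * JJ). lra. replace (2 * JJ * (exp (INR q * rho / 2) / (2 * JJ))) with (exp (INR q * rho / 2)) by (field; lra).
   lra. }
 apply INR_lt in Hbig.
 exists jm, (firstn (2 * (q + 1) * K) big), (fun beta => map (fun zeta => wordof n (fst zeta)) (Cb beta)).
 split. apply in_seq in Hjm. lia.
 split. apply NoDup_firstn'. apply NoDup_filter. apply allw_nodup.
 split. apply firstn_length_le. lia.
 intros beta Hb. apply In_firstn' in Hb. apply filter_In in Hb. destruct Hb as [HbW Hbp].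
 split. apply allw_sound. exact HbW.
 split. apply NoDup_map_on. apply NoDup_filter, NoDup_filter; auto.
 { intros x y Hx Hy Hxy. apply (good_inj n z v); auto.
   apply HL, HLjL, (proj1 (HCb _ _ Hx)). apply HL, HLjL, (proj1 (HCb _ _ Hy)). }
 split. rewrite length_map. unfold pbig in Hbp. destruct (Rle_dec thr (INR (length (Cb beta)))); [|discriminate].
 unfold thr in r. apply Rle_ge. exact r.
 intros alpha Ha. apply in_map_iff in Ha. destruct Ha as [zeta [<- Hz]].
 destruct (HCb _ _ Hz) as [HzLj Hg]. assert (Gz := proj1 (HL zeta) (HLjL zeta HzLj)).
 destruct Gz as [Z1 [Z2 [Z3 Z4]]].
 split. apply wordof_word; auto.
 split. rewrite wordof_trunc by lia. exact Hg.
 exists (fst zeta). split.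
 { pose proof (wordof_xalpha n (fst zeta) Z1) as X. rewrite <- iter_fm_fst, Z3 in X. exact X. }
 split. exact Z4.
 apply filter_In in HzLj. destruct HzLj as [_ Hp]. unfold pj in Hp.
 destruct (Rle_dec (exp (a jm * INR n)) (dEn F dF n (fst zeta))); [|discriminate].
 destruct (Rle_dec (dEn F dF n (fst zeta)) (exp (b jm * INR n))); [|discriminate]. split; auto.
Qed.

End Dyn.
Theorem proposition3p3
  (r l : nat) (F dF tau dtau : R -> R) (lam Lam Rc rho : R)
  (J : nat) (a b : nat -> R) (q : nat) :
  (2 <= r)%nat -> (2 <= l)%nat ->
  is_Cr r F -> (forall x, F (x + 1) = F x + INR l) -> F 0 = 0 ->
  (forall x, derivable_pt_lim F x (dF x)) ->
  1 < lam -> (forall x, lam <= dF x <= Lam) ->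
  is_Cr r tau -> (forall x, tau (x + 1) = tau x) ->
  (forall x, derivable_pt_lim tau x (dtau x)) ->
  (exists M, M < Rc /\ forall x, Rabs (dtau x) <= M) ->
  0 < rho ->
  (forall t, ln lam <= t <= ln Lam -> exists j, (1 <= j <= J)%nat /\ a j < t < b j) ->
  (forall j, (1 <= j <= J)%nat -> b j - a j < rho / 3) ->
  (1 <= q)%nat ->
  INR ((q + 1) * Nconst rho Lam) * exp (- (INR q * rho / 2)) < / (4 * INR J) ->
  (2 * (q + 1) * Nconst rho Lam <= l ^ q)%nat ->
  Ntau_ge F tau dF dtau Rc lam (exp rho) ->
  forall m : nat, exists n : nat, (m <= n)%nat /\ (q <= n)%nat /\
    exists (x s : R) (v0 : R * R) (j : nat) (B : list (list nat))
           (Sig : list nat -> list (list nat)),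
      InUnit x /\ InUnit s /\ unit_vec v0 /\ (1 <= j <= J)%nat /\
      NoDup B /\ length B = (2 * (q + 1) * Nconst rho Lam)%nat /\
      forall beta, In beta B ->
        is_word l q beta /\ NoDup (Sig beta) /\
        INR (length (Sig beta)) >= exp (rho * INR n) / INR l ^ q / (2 * INR J) /\
        forall alpha, In alpha (Sig beta) ->
          is_word l n alpha /\ trunc q alpha = beta /\
          exists y, is_x_alpha F x alpha y /\
            in_img_cone (Dfn F dF dtau n y) (thetaR Rc lam) v0 /\
            exp (a j * INR n) <= dEn F dF n y <= exp (b j * INR n).
Proof.
 intros Hr Hl HCF HF1 HF0 HdF Hlam HdFb HCt Htp Hdt [M [HM Hdtau]] Hrho Hcov Hab Hq Hqc Hlq
   [Nseq [Lm [HN [Hcv HLm]]]] m.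
 destruct (choose_n l F dF tau dtau lam Lam Rc M Hl HF1 HF0 HdF Hlam HdFb HM Hdtau Nseq Lm rho HN Hcv HLm Hrho q m Hq)
   as [n [Hmn [Hqn Hgr]]].
 exists n. split; auto. split. lia.
 assert (HJ : (1 <= J)%nat).
 { destruct (Hcov (ln lam)) as [j [Hj _]]. specialize (HdFb 0). split. lra. apply ln_le_mono; lra. lia. }
 assert (HJ' : 0 < INR J) by (apply lt_0_INR; lia).
 set (K := Nconst rho Lam) in *.
 assert (HK : INR (2 * (q + 1) * K) < exp (INR q * rho / 2) / (2 * INR J)).
 { rewrite <- Nat.mul_assoc, mult_INR. rewrite exp_Ropp in Hqc. set (e := exp (INR q * rho / 2)) in *.
   assert (He : 0 < e) by apply exp_pos. set (X := INR ((q + 1) * K)) in *.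
   apply Rmult_lt_compat_r with (r := 4 * INR J * e) in Hqc; [|nra].
   replace (X * / e * (4 * INR J * e)) with (4 * INR J * X) in Hqc by (field; lra).
   replace (/ (4 * INR J) * (4 * INR J * e)) with e in Hqc by (field; lra).
   apply Rmult_lt_reg_l with (2 * INR J). lra.
   replace (2 * INR J * (e / (2 * INR J))) with e by (field; lra). simpl INR. lra. }
 destruct (lub_attained l F dF tau dtau lam Rc Hl n (Nseq n) (HN n)) as [z [v [k [Uz1 [Uz2 [Uv [Hk Hkeq]]]]]]].
 pose proof (Nseq_lower l F dF tau dtau lam Lam Rc M Hl HF1 HF0 HdF Hlam HdFb HM Hdtau Nseq Lm rho HN Hcv HLm Hrho n ltac:(lia)) as Hlow.
 pose proof (Nseq_lower l F dF tau dtau lam Lam Rc M Hl HF1 HF0 HdF Hlam HdFb HM Hdtau Nseq Lm rho HN Hcv HLm Hrho (n - q) ltac:(lia)) as Hlowq.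
 destruct (main_step l F dF tau dtau lam Lam Rc M Hl HF1 HF0 HdF Hlam HdFb HM Hdtau rho q J K n a b z v k (Nseq (n - q)%nat)
   Hq Hqn Hcov HK (HN (n - q)%nat) ltac:(pose proof (exp_pos (rho * INR (n - q)%nat)); lra) Uz1 Uz2 Uv Hk
   ltac:(rewrite <- Hkeq; exact Hlow) ltac:(rewrite <- Hkeq; exact Hgr)) as [j [B [Sig [Hj [HB1 [HB2 HB3]]]]]].
 exists (fst z), (snd z), v, j, B, Sig. repeat (split; [assumption|]). exact HB3.
Qed.
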